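(* Let $M\ge 2$, $D,Q,K$ positive integers, and let $\varphi:\mathbb{R}^D\times R\to\mathbb{R}^K$, $(\bm{x},\rho)\mapsto\varphi(\bm{x};\rho)$, be a function on a parameter set $R$ such that for every $\bm{x}\in\mathbb{R}^D$ there exists $\rho\in R$ with $\varphi(\bm{x};\rho)\neq\bm{0}$. Consider networks $\mathcal{F}=\{F_i\}_{i=1}^M$ with $F_i(\bm{x}) = \bm{W}^i\varphi(\bm{x};\rho^i)$, parametrised by $\bm{W}^i\in\mathbb{R}^{Q\times K}$ and $\rho^i\in R$. Let $\mathcal{D}=\{(\bm{x}_n,\bm{y}_n)\}_{n=1}^N$ be a nonempty finite data set in $\mathbb{R}^D\times\mathbb{R}^Q$, $\overline{F}=\frac1M\sum_i F_i$, and $$E_\lambda(\mathcal{F},\mathcal{D}) = \frac{1}{N}\sum_{n=1}^N\Big(\frac{1}{M}\sum_{i=1}^M\|F_i(\bm{x}_n)-\bm{y}_n\|^2-\lambda\frac{1}{M}\sum_{i=1}^M\|F_i(\bm{x}_n)-\overline{F}(\bm{x}_n)\|^2\Big).$$ With infima over all parametrisations $(\bm{W}^i,\rho^i)_{i=1}^M$: (i) if $\lambda\le1$ then $\inf E_\lambda(\mathcal{F},\mathcal{D})\ge0$; (ii) if $\lambda>1$ then $\inf E_\lambda(\mathcal{F},\mathcal{D})=-\infty$. Moreover, if $\lambda>1$, then for all $Q_1,Q_2>0$ there exists a parametrisation with $E_\lambda(\mathcal{F},\mathcal{D})<-Q_1$, $\frac1N\sum_n\|\overline{F}(\bm{x}_n)-\bm{y}_n\|^2>Q_2$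 and $\frac1N\sum_n\frac1M\sum_i\|F_i(\bm{x}_n)-\bm{y}_n\|^2>Q_2$.
   Context: Networks of this form are called Modular Linear Top Layer Networks. $\|\cdot\|$ is the Euclidean norm. *)

(* Defs.v *)
From HB Require Import structures.
From mathcomp Require Import all_boot all_order all_algebra.
From mathcomp Require Import all_classical all_reals all_analysis.
Set Implicit Arguments. Unset Strict Implicit. Unset Printing Implicit Defensive.
Import Order.TTheory GRing.Theory Num.Theory.
Local Open Scope ring_scope.

Definition sqnorm (R : realType) (n : nat) (v : 'cV[R]_n) : R :=
  \sum_(i < n) (v i 0) ^+ 2.

Definition netF (R : realType) (P : Type) (D Q K M : nat)
  (phi : 'cV[R]_D -> P -> 'cV[R]_K)
  (W : 'I_M -> 'M[R]_(Q, K)) (rho : 'I_M -> P) (i : 'I_M) (x : 'cV[R]_D)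
  : 'cV[R]_Q := W i *m phi x (rho i).

Definition netFbar (R : realType) (P : Type) (D Q K M : nat)
  (phi : 'cV[R]_D -> P -> 'cV[R]_K)
  (W : 'I_M -> 'M[R]_(Q, K)) (rho : 'I_M -> P) (x : 'cV[R]_D) : 'cV[R]_Q :=
  (M%:R)^-1 *: \sum_(i < M) netF phi W rho i x.

Definition Elam (R : realType) (P : Type) (D Q K M N : nat)
  (phi : 'cV[R]_D -> P -> 'cV[R]_K)
  (xs : 'I_N -> 'cV[R]_D) (ys : 'I_N -> 'cV[R]_Q) (lam : R)
  (W : 'I_M -> 'M[R]_(Q, K)) (rho : 'I_M -> P) : R :=
  (N%:R)^-1 * \sum_(n < N)
    ((M%:R)^-1 * \sum_(i < M) sqnorm (netF phi W rho i (xs n) - ys n)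
     - lam * ((M%:R)^-1 *
        \sum_(i < M) sqnorm (netF phi W rho i (xs n) - netFbar phi W rho (xs n)))).

Definition ensErr (R : realType) (P : Type) (D Q K M N : nat)
  (phi : 'cV[R]_D -> P -> 'cV[R]_K)
  (xs : 'I_N -> 'cV[R]_D) (ys : 'I_N -> 'cV[R]_Q)
  (W : 'I_M -> 'M[R]_(Q, K)) (rho : 'I_M -> P) : R :=
  (N%:R)^-1 * \sum_(n < N) sqnorm (netFbar phi W rho (xs n) - ys n).

Definition avgErr (R : realType) (P : Type) (D Q K M N : nat)
  (phi : 'cV[R]_D -> P -> 'cV[R]_K)
  (xs : 'I_N -> 'cV[R]_D) (ys : 'I_N -> 'cV[R]_Q)
  (W : 'I_M -> 'M[R]_(Q, K)) (rho : 'I_M -> P) : R :=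
  (N%:R)^-1 * \sum_(n < N)
    ((M%:R)^-1 * \sum_(i < M) sqnorm (netF phi W rho i (xs n) - ys n)).

Definition infE (R : realType) (P : Type) (D Q K M N : nat)
  (phi : 'cV[R]_D -> P -> 'cV[R]_K)
  (xs : 'I_N -> 'cV[R]_D) (ys : 'I_N -> 'cV[R]_Q) (lam : R) : \bar R :=
  ereal_inf [set (Elam phi xs ys lam p.1 p.2)%:E
            | p in [set: ('I_M -> 'M[R]_(Q, K)) * ('I_M -> P)]]%classic.

(* Main.v *)
Require Import Defs.
From HB Require Import structures.
From mathcomp Require Import all_boot all_order all_algebra.
From mathcomp Require Import all_classical all_reals all_analysis.
From mathcomp Require Import ring lra.
Import Order.TTheory GRing.Theory Num.Theory.
Local Open Scope ring_scope.
Set Implicit Arguments. Unset Strict Implicit.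

Section Gen.
Variable R : realType.

Lemma sqnorm_ge0 n (v : 'cV[R]_n) : 0 <= sqnorm v.
Proof. by apply: sumr_ge0 => i _; rewrite sqr_ge0. Qed.

Lemma sqnormZ n (k : R) (v : 'cV[R]_n) : sqnorm (k *: v) = k ^+ 2 * sqnorm v.
Proof.
rewrite /sqnorm mulr_sumr; apply: eq_bigr => i _; rewrite mxE; ring.
Qed.

Lemma sqnormD_le n (u v : 'cV[R]_n) : sqnorm (u + v) <= 2 * sqnorm u + 2 * sqnorm v.
Proof.
rewrite /sqnorm !mulr_sumr -big_split /=; apply: ler_sum => i _; rewrite mxE.
set x := u i 0; set y := v i 0. have := sqr_ge0 (x - y). rewrite !expr2 => h. nra.
Qed.

Lemma sqnormN n (v : 'cV[R]_n) : sqnorm (- v) = sqnorm v.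
Proof. by rewrite -scaleN1r sqnormZ; rewrite expr2 mulrNN mul1r mul1r. Qed.

Lemma decomp_scalar M (a : 'I_M -> R) (b : R) : (0 < M)%N ->
  let m := (M%:R)^-1 * \sum_(i < M) a i in
  \sum_(i < M) (a i - b) ^+ 2 = \sum_(i < M) (a i - m) ^+ 2 + M%:R * (m - b) ^+ 2.
Proof.
move=> M0 m.
have H : \sum_(i < M) (a i - m) = 0.
  have hM : (M%:R : R) != 0 by rewrite pnatr_eq0 -lt0n.
  rewrite sumrB sumr_const card_ord /m -mulr_natr; field; exact: hM.
transitivity (\sum_(i < M) ((a i - m) ^+ 2 + (2 * (m - b)) * (a i - m) + (m - b) ^+ 2)).
  by apply: eq_bigr => i _; ring.
rewrite big_split big_split /= -mulr_sumr H mulr0 addr0 sumr_const card_ord.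
by rewrite mulr_natl.
Qed.

Lemma decomp_vec M Q (a : 'I_M -> 'cV[R]_Q) (b : 'cV[R]_Q) : (0 < M)%N ->
  \sum_(i < M) sqnorm (a i - b) =
  \sum_(i < M) sqnorm (a i - (M%:R^-1 *: \sum_(j < M) a j))
  + M%:R * sqnorm ((M%:R^-1 *: \sum_(j < M) a j) - b).
Proof.
move=> M0; rewrite /sqnorm [LHS]exchange_big [X in _ = X + _]exchange_big.
rewrite mulr_sumr -big_split /=.
apply: eq_bigr => q _.
have := @decomp_scalar M (fun i => a i q 0) (b q 0) M0 => /= H.
transitivity (\sum_(i < M) (a i q 0 - b q 0) ^+ 2); first by apply: eq_bigr => i _; rewrite !mxE.
rewrite H.
congr (_ + _ * _).
  by apply: eq_bigr => i _; rewrite !mxE summxE.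
by rewrite !mxE summxE.
Qed.

Lemma point_eq M Q (a : 'I_M -> 'cV[R]_Q) (b : 'cV[R]_Q) : (0 < M)%N ->
  M%:R^-1 * \sum_(i < M) sqnorm (a i - b) =
  sqnorm ((M%:R^-1 *: \sum_(j < M) a j) - b)
  + M%:R^-1 * \sum_(i < M) sqnorm (a i - (M%:R^-1 *: \sum_(j < M) a j)).
Proof.
move=> M0; rewrite decomp_vec //.
have hM : (M%:R : R) != 0 by rewrite pnatr_eq0 -lt0n.
rewrite mulrDr addrC mulrA mulVf // mul1r.
by [].
Qed.

Lemma sum_ge_ord n (F : 'I_n -> R) j : (forall i, 0 <= F i) -> F j <= \sum_(i < n) F i.
Proof.
move=> F0; rewrite (bigD1 j) //= lerDl; by apply: sumr_ge0 => i _.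
Qed.

Lemma sqnorm_gt0 n (v : 'cV[R]_n) : v != 0 -> 0 < sqnorm v.
Proof.
move=> v0; rewrite lt_def sqnorm_ge0 andbT; apply: contra v0 => /eqP.
move/eqP; rewrite /sqnorm psumr_eq0 => [/allP H|i _]; last exact: sqr_ge0.
apply/eqP/matrixP => i j; rewrite (ord1 j) mxE.
have := H i (mem_index_enum i); rewrite implyTb sqrf_eq0 => /eqP //.
Qed.

Lemma sum_delta n (j : 'I_n) : \sum_(i < n) ((i == j)%:R : R) = 1.
Proof.
rewrite (bigD1 j) //= eqxx big1 ?addr0 // => i /negPf ->; by [].
Qed.
End Gen.

Section Main.
Variables (R : realType) (P : Type) (M D Q K N : nat)
  (phi : 'cV[R]_D -> P -> 'cV[R]_K)
  (xs : 'I_N -> 'cV[R]_D) (ys : 'I_N -> 'cV[R]_Q).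
Hypothesis M0 : (0 < M)%N.

Definition Vn (W : 'I_M -> 'M[R]_(Q, K)) (rho : 'I_M -> P) (n : 'I_N) : R :=
  M%:R^-1 * \sum_(i < M) sqnorm (netF phi W rho i (xs n) - netFbar phi W rho (xs n)).

Lemma Vn_ge0 W rho n : 0 <= Vn W rho n.
Proof.
apply: mulr_ge0; first by rewrite invr_ge0 ler0n.
by apply: sumr_ge0 => i _; exact: sqnorm_ge0.
Qed.

Lemma Elam_eq lam W rho : Elam phi xs ys lam W rho =
  N%:R^-1 * \sum_(n < N) (sqnorm (netFbar phi W rho (xs n) - ys n) + (1 - lam) * Vn W rho n).
Proof.
rewrite /Elam; congr (_ * _); apply: eq_bigr => n _.
rewrite point_eq // /Vn /netFbar; ring.
Qed.

Lemma avgErr_eq W rho : avgErr phi xs ys W rho =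
  ensErr phi xs ys W rho + N%:R^-1 * \sum_(n < N) Vn W rho n.
Proof.
rewrite /avgErr /ensErr -mulrDr -big_split /=; congr (_ * _); apply: eq_bigr => n _.
by rewrite point_eq.
Qed.

Section Bounds.
Variables (W : 'I_M -> 'M[R]_(Q, K)) (rho : 'I_M -> P) (z : 'I_N -> 'cV[R]_Q) (s1 s2 : R).
Hypothesis hF : forall n, netFbar phi W rho (xs n) = s1 *: z n.
Hypothesis hV : forall n, Vn W rho n = s2 * sqnorm (z n).
Let Zs := N%:R^-1 * \sum_(n < N) sqnorm (z n).
Let Ys := N%:R^-1 * \sum_(n < N) sqnorm (ys n).

Lemma Elam_le lam : Elam phi xs ys lam W rho <= (2 * s1 ^+ 2 + (1 - lam) * s2) * Zs + 2 * Ys.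
Proof.
rewrite Elam_eq.
apply: (@le_trans _ _ (N%:R^-1 * \sum_(n < N)
   ((2 * s1 ^+ 2 + (1 - lam) * s2) * sqnorm (z n) + 2 * sqnorm (ys n)))).
  apply: ler_wpM2l; first by rewrite invr_ge0 ler0n.
  apply: ler_sum => n _; rewrite hF hV.
  have := sqnormD_le (s1 *: z n) (- ys n); rewrite sqnormN sqnormZ => h.
  set a := sqnorm _ in h *; set b := sqnorm (z n) in h *.
  set c := sqnorm (ys n) in h *.
  rewrite (_ : (2 * s1 ^+ 2 + (1 - lam) * s2) * b = 2*(s1^+2*b) + (1-lam)*(s2*b)); last by ring.
  lra.
rewrite /Zs /Ys big_split /= -!mulr_sumr le_eqVlt; apply/orP; left; apply/eqP; ring.
Qed.

Lemma ensErr_ge : s1 ^+ 2 / 2 * Zs - Ys <= ensErr phi xs ys W rho.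
Proof.
rewrite /ensErr.
apply: (@le_trans _ _ (N%:R^-1 * \sum_(n < N)
   (s1 ^+ 2 / 2 * sqnorm (z n) - sqnorm (ys n)))).
  rewrite /Zs /Ys sumrB -mulr_sumr le_eqVlt; apply/orP; left; apply/eqP; ring.
apply: ler_wpM2l; first by rewrite invr_ge0 ler0n.
apply: ler_sum => n _; rewrite hF.
have := sqnormD_le (s1 *: z n - ys n) (ys n); rewrite subrK sqnormZ => h.
set a := sqnorm (s1 *: z n - ys n) in h *; set b := sqnorm (z n) in h *.
set c := sqnorm (ys n) in h *.
have -> : s1 ^+ 2 / 2 * b = (s1 ^+ 2 * b) / 2 by rewrite mulrAC.
lra.
Qed.
End Bounds.

Section Constr.
Variables (r : P) (A : 'M[R]_(Q, K)) (s : 'I_M -> R).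
Let W := fun i => s i *: A.
Let rho := fun _ : 'I_M => r.
Let z := fun n => A *m phi (xs n) r.
Let sbar := M%:R^-1 * \sum_(i < M) s i.

Lemma netF_c i n : netF phi W rho i (xs n) = s i *: z n.
Proof. by rewrite /netF /W /rho /z scalemxAl. Qed.

Lemma hF_c n : netFbar phi W rho (xs n) = sbar *: z n.
Proof.
rewrite /netFbar /sbar (eq_bigr _ (fun i _ => netF_c i n)) -scaler_suml.
by rewrite scalerA.
Qed.

Lemma hV_c n : Vn W rho n = (M%:R^-1 * \sum_(i < M) (s i - sbar) ^+ 2) * sqnorm (z n).
Proof.
rewrite /Vn -mulrA mulr_suml; congr (_ * _); apply: eq_bigr => i _.
by rewrite netF_c hF_c -scalerBl sqnormZ.
Qed.
End Constr.

Lemma part3 (M2 : (2 <= M)%N) (N0 : (0 < N)%N) (Q0 : (0 < Q)%N)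
  (hphi : forall x : 'cV[R]_D, exists rho : P, phi x rho != 0)
  (lam : R) (hl : 1 < lam) (Q1 Q2 : R) (hQ1 : 0 < Q1) (hQ2 : 0 < Q2) :
  exists (W : 'I_M -> 'M[R]_(Q, K)) (rho : 'I_M -> P),
       Elam phi xs ys lam W rho < - Q1 /\
       ensErr phi xs ys W rho > Q2 /\
       avgErr phi xs ys W rho > Q2.
Proof.
pose n0 : 'I_N := Ordinal N0.
have [r hr] := hphi (xs n0).
pose v0 := phi (xs n0) r.
pose A : 'M[R]_(Q, K) := \matrix_(q, k) v0 k 0.
pose z := fun n => A *m phi (xs n) r.
pose Zs := N%:R^-1 * \sum_(n < N) sqnorm (z n).
pose Ys := N%:R^-1 * \sum_(n < N) sqnorm (ys n).
have hN : 0 < (N%:R : R)^-1 by rewrite invr_gt0 ltr0n.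
have hMr : 0 < (M%:R : R) by rewrite ltr0n.
have Zpos : 0 < Zs.
  rewrite /Zs; apply: mulr_gt0 => //.
  apply: (@lt_le_trans _ _ (sqnorm (z n0))); last first.
    by apply: sum_ge_ord => i; exact: sqnorm_ge0.
  apply: (@lt_le_trans _ _ ((z n0 (Ordinal Q0) 0) ^+ 2)); last first.
    by apply: sum_ge_ord => i; exact: sqr_ge0.
  have -> : z n0 (Ordinal Q0) 0 = sqnorm v0.
    rewrite /z mxE /sqnorm; apply: eq_bigr => k _; by rewrite mxE expr2.
  by rewrite exprn_gt0 // sqnorm_gt0.
have Yge : 0 <= Ys.
  by apply: mulr_ge0; [exact: ltW | apply: sumr_ge0 => n _; exact: sqnorm_ge0].
pose kap := (lam - 1) / (2 * M%:R).
have kpos : 0 < kap by apply: divr_gt0; [rewrite subr_gt0 | rewrite mulr_gt0].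
pose u := kap / 2.
have upos : 0 < u by rewrite divr_gt0.
pose c := u / (1 + u).
have cpos : 0 < c by rewrite divr_gt0 // addr_gt0.
have cle1 : c <= 1 by rewrite ler_pdivrMr ?addr_gt0 // mul1r lerDr ltW.
have cleu : c <= u by rewrite ler_pdivrMr ?addr_gt0 // ler_peMr ?lerDl ?ltW.
have c2 : c ^+ 2 <= kap / 2.
  rewrite expr2; apply: (le_trans _ cleu); rewrite ger_pMr //.
pose alpha := kap * Zs.
pose beta := c ^+ 2 * Zs / 2.
have apos : 0 < alpha by rewrite mulr_gt0.
have bpos : 0 < beta by rewrite divr_gt0 // mulr_gt0 // exprn_gt0.
pose t := 1 + (Q1 + 2 * Ys) / alpha + (Q2 + Ys) / beta.
have n1 : 0 <= Q1 + 2 * Ys by apply: addr_ge0; [exact: ltW | apply: mulr_ge0].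
have n2 : 0 <= Q2 + Ys by apply: addr_ge0; [exact: ltW | ].
have d1 : 0 <= (Q1 + 2 * Ys) / alpha by rewrite divr_ge0 // ltW.
have d2 : 0 <= (Q2 + Ys) / beta by rewrite divr_ge0 // ltW.
have t1 : 1 <= t by rewrite /t -addrA lerDl addr_ge0.
have tt : t <= t ^+ 2 by rewrite expr2 ler_peMr // (le_trans _ t1).
have ta : (Q1 + 2 * Ys) < t * alpha.
  rewrite -ltr_pdivrMr // /t; lra.
have tb : (Q2 + Ys) < t * beta.
  rewrite -ltr_pdivrMr // /t; lra.
pose i0 : 'I_M := Ordinal (ltn_trans (ltnSn 0) M2).
pose i1 : 'I_M := Ordinal M2.
pose d := fun i : 'I_M => ((i == i0)%:R - (i == i1)%:R : R).
pose s := fun i => t * (c + d i).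
have sbarE : M%:R^-1 * \sum_(i < M) s i = t * c.
  rewrite /s -mulr_sumr big_split /= sumr_const card_ord /d sumrB !sum_delta subrr.
  rewrite addr0 -mulr_natr; field; exact: lt0r_neq0.
pose s2 := M%:R^-1 * \sum_(i < M) (s i - t * c) ^+ 2.
have s2ge : t ^+ 2 / M%:R <= s2.
  rewrite /s2 [X in _ <= X]mulrC ler_pM2r ?invr_gt0 //.
  have -> : t ^+ 2 = (s i0 - t * c) ^+ 2.
    rewrite /s /d eqxx (_ : (i0 == i1) = false) // /=; ring.
  by apply: sum_ge_ord => i; exact: sqr_ge0.
pose W := fun i => s i *: A.
pose rho := fun _ : 'I_M => r.
have hF : forall n, netFbar phi W rho (xs n) = (t * c) *: z n.
  by move=> n; rewrite (hF_c r A s n) sbarE.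
have hV : forall n, Vn W rho n = s2 * sqnorm (z n).
  by move=> n; rewrite (hV_c r A s n) sbarE.
have E1 := Elam_le hF hV lam.
have E2 := ensErr_ge hF.
rewrite -/Zs -/Ys in E1 E2.
have hE : ensErr phi xs ys W rho > Q2.
  apply: lt_le_trans E2.
  have h1 : t * beta <= t ^+ 2 * beta by rewrite ler_wpM2r // ltW.
  have -> : (t * c) ^+ 2 / 2 * Zs = t ^+ 2 * beta by rewrite /beta; ring.
  lra.
exists W, rho; split; last split => //.
  have k1 : 2 * (t * c) ^+ 2 <= kap * t ^+ 2.
    rewrite exprMn; have := ler_wpM2l (sqr_ge0 t) c2.
    move=> h; have -> : kap * t ^+ 2 = 2 * (t ^+ 2 * (kap / 2)) by field.
    by rewrite ler_wpM2l.
  have k2 : (1 - lam) * s2 <= (1 - lam) * (t ^+ 2 / M%:R).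
    by rewrite ler_wnM2l // subr_le0 ltW.
  have k3 : (1 - lam) * (t ^+ 2 / M%:R) = - (2 * (kap * t ^+ 2)).
    rewrite /kap; field; exact: lt0r_neq0.
  have k4 : (2 * (t * c) ^+ 2 + (1 - lam) * s2) * Zs <= - (t ^+ 2 * alpha).
    have -> : - (t ^+ 2 * alpha) = (- (kap * t ^+ 2)) * Zs by rewrite /alpha; ring.
    apply: ler_wpM2r; [exact: ltW | lra].
  have h1 : t * alpha <= t ^+ 2 * alpha by rewrite ler_wpM2r // ltW.
  lra.
rewrite avgErr_eq //; apply: (lt_le_trans hE); rewrite lerDl.
apply: mulr_ge0; [exact: ltW | apply: sumr_ge0 => n _; exact: Vn_ge0].
Qed.
End Main.

Theorem theorem5 (R : realType) (P : Type) (M D Q K N : nat)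
  (phi : 'cV[R]_D -> P -> 'cV[R]_K)
  (xs : 'I_N -> 'cV[R]_D) (ys : 'I_N -> 'cV[R]_Q) :
  (2 <= M)%N -> (0 < D)%N -> (0 < Q)%N -> (0 < K)%N -> (0 < N)%N ->
  (forall x : 'cV[R]_D, exists rho : P, phi x rho != 0) ->
  (forall lam : R, lam <= 1 ->
     (0 <= @infE R P D Q K M N phi xs ys lam)%E) /\
  (forall lam : R, 1 < lam ->
     @infE R P D Q K M N phi xs ys lam = -oo%E) /\
  (forall lam : R, 1 < lam -> forall Q1 Q2 : R, 0 < Q1 -> 0 < Q2 ->
     exists (W : 'I_M -> 'M[R]_(Q, K)) (rho : 'I_M -> P),
       Elam phi xs ys lam W rho < - Q1 /\
       ensErr phi xs ys W rho > Q2 /\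
       avgErr phi xs ys W rho > Q2).
Proof.
move=> M2 D0 Q0 K0 N0 hphi.
have M0 : (0 < M)%N by apply: leq_trans M2.
have P3 := part3 xs ys M0 M2 N0 Q0 hphi.
split; last split.
- move=> lam hl; apply/ereal_infP => y [p _ <-]; rewrite lee_fin Elam_eq //.
  apply: mulr_ge0; first by rewrite invr_ge0 ler0n.
  apply: sumr_ge0 => n _; apply: addr_ge0; first exact: sqnorm_ge0.
  by apply: mulr_ge0; [rewrite subr_ge0 | exact: Vn_ge0].
- move=> lam hl.
  have H : forall Q1 : R, 0 < Q1 -> (@infE R P D Q K M N phi xs ys lam <= (- Q1)%:E)%E.
    move=> Q1 hQ1; have [W [rho [h _]]] := P3 lam hl Q1 1 hQ1 ltr01.
    apply: ge_ereal_inf; exists (Elam phi xs ys lam W rho)%:E.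
      by exists (W, rho).
    by rewrite lee_fin ltW.
  move: H; case: (@infE R P D Q K M N phi xs ys lam) => [r| |] // H.
  + have := H (`|r| + 1) (ltr_pwDr ltr01 (normr_ge0 r)).
    rewrite lee_fin => h; exfalso; have := Num.Theory.ler_norm r; have := normr_ge0 r; move=> h1 h2; have := Num.Theory.ler_norm (- r); rewrite normrN => h3; lra.
  + by have := H 1 ltr01.
- exact: P3.
Qed.
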